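(* Let $G$ be a regular bipartite Tanner graph with girth $g$ and smallest left (variable-node) degree $d$. Then the minimum pseudocodeword weights of $G$ on the BSC and on the AWGN channel, $w^{BSC}_{\min}$ and $w^{AWGN}_{\min}$, each satisfy \[ w_{\min} \ge \begin{cases} 1+d+d(d-1)+\cdots+d(d-1)^{\frac{g-6}{4}}, & \frac{g}{2}\text{ odd},\\ 1+d+d(d-1)+\cdots+d(d-1)^{\frac{g-8}{4}}+(d-1)^{\frac{g-4}{4}}, & \frac{g}{2}\text{ even}.\end{cases}\]
   Context: A Tanner graph $G$ is a finite bipartite graph with variable (left) nodes $v_1,\dots,v_n$ and check (right) nodes $u_1,\dots,u_m$; it defines the binary code $\mathcal{C}$ of all $x\in\{0,1\}^n$ such that every check node has an even number of neighbours $v_i$ with $x_i=1$. A degree-$\ell$ lift (cover) $\hat G$ of $G$ replaces each node $x$ of $G$ by a cloud of $\ell$ copies, and for each edge $(x,y)$ of $G$ places $\ell$ edges between the clouds of $x$ and $y$ forming a perfect matching; $\hat G$ is again a Tanner graph. A (lift-realizable) pseudocodeword of $G$ is a vector $p=(p_1,\dots,p_n)$ of nonnegative integers obtained from a codeword of the code of some finite-degree lift $\hat G$ by letting $p_i$ be the number of copies of $v_i$ assigned value 1. For a nonzero pseudocodeword $p$, let $e$ be the smallest number such that the sum of the $e$ largest $p_i$ is at least $\frac12\sum_i p_i$; then $w^{BSC}(p)=2e$ if this sum equals $\frac12\sum_ip_i$ and $w^{BSC}(p)=2e-1$ if it is strictly larger; and $w^{AWGN}(p)=(\sum_i p_i)^2/\sum_i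 p_i^2$. $w^{BSC}_{\min}$ (resp. $w^{AWGN}_{\min}$) is the minimum of $w^{BSC}(p)$ (resp. $w^{AWGN}(p)$) over all nonzero lift-realizable pseudocodewords $p$ of $G$. *)

(* Defs.v *)
From HB Require Import structures.
From mathcomp Require Import all_boot all_order all_fingroup all_algebra.
Set Implicit Arguments. Unset Strict Implicit. Unset Printing Implicit Defensive.
Import GRing.Theory Num.Theory.

(* A Tanner graph with n variable nodes 'I_n and m check nodes 'I_m is given by
   its edge relation H : check -> variable -> bool (H j i = edge between u_j and v_i). *)

Definition tanner_adj (n m : nat) (H : 'I_m -> 'I_n -> bool) : rel ('I_n + 'I_m) :=
  fun x y => match x, y with
             | inl i, inr j => H j i
             | inr j, inl i => H j i
             | _, _ => false
             end.

Definition has_cycle_of_length (n m : nat) (H : 'I_m -> 'I_n -> bool) (k : nat) : Prop :=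
  exists s : seq ('I_n + 'I_m),
    [/\ size s = k, 3 <= k, uniq s & path.cycle (tanner_adj H) s].

Definition girth_is (n m : nat) (H : 'I_m -> 'I_n -> bool) (g : nat) : Prop :=
  has_cycle_of_length H g /\ (forall k, k < g -> ~ has_cycle_of_length H k).

Definition var_deg (n m : nat) (H : 'I_m -> 'I_n -> bool) (i : 'I_n) : nat :=
  #|[set j | H j i]|.
Definition chk_deg (n m : nat) (H : 'I_m -> 'I_n -> bool) (j : 'I_m) : nat :=
  #|[set i | H j i]|.

Definition regular_tanner (n m : nat) (H : 'I_m -> 'I_n -> bool) : Prop :=
  exists dv dc : nat, (forall i, var_deg H i = dv) /\ (forall j, chk_deg H j = dc).

Definition smallest_left_degree (n m : nat) (H : 'I_m -> 'I_n -> bool) (d : nat) : Prop :=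
  (exists i, var_deg H i = d) /\ (forall i, d <= var_deg H i).

(* Degree-l lift: each edge (u_j, v_i) is replaced by the perfect matching
   (v_i, a) -- (u_j, pi j i a) between the clouds (only the values of pi on edges matter).
   x : assignment of the copies of the variable nodes. *)
Definition lift_codeword (n m l : nat) (H : 'I_m -> 'I_n -> bool)
  (pi : 'I_m -> 'I_n -> {perm 'I_l}) (x : 'I_n -> 'I_l -> bool) : Prop :=
  forall (j : 'I_m) (b : 'I_l),
    ~~ odd #|[set ia : 'I_n * 'I_l | [&& H j ia.1, pi j ia.1 ia.2 == b & x ia.1 ia.2]]|.

Definition pseudocodeword (n m : nat) (H : 'I_m -> 'I_n -> bool) (p : 'I_n -> nat) : Prop :=
  exists (l : nat) (pi : 'I_m -> 'I_n -> {perm 'I_l}) (x : 'I_n -> 'I_l -> bool),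
    lift_codeword H pi x /\ forall i, p i = #|[set a | x i a]|.

Definition psum (n : nat) (p : 'I_n -> nat) : nat := \sum_(i < n) p i.

Definition sum_largest (n : nat) (p : 'I_n -> nat) (e : nat) : nat :=
  \max_(S : {set 'I_n} | #|S| == e) \sum_(i in S) p i.

Definition bsc_e (n : nat) (p : 'I_n -> nat) : nat :=
  find (fun e => psum p <= 2 * sum_largest p e) (iota 0 n.+1).

Definition w_BSC (n : nat) (p : 'I_n -> nat) : nat :=
  let e := bsc_e p in
  if 2 * sum_largest p e == psum p then 2 * e else (2 * e).-1.

Definition w_AWGN (n : nat) (p : 'I_n -> nat) : rat :=
  ((psum p ^ 2)%:R / (\sum_(i < n) p i ^ 2)%:R)%R.

Definition girth_bound (d g : nat) : nat :=
  if odd g./2 then 1 + \sum_(k < (g - 2) %/ 4) d * (d - 1) ^ k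
  else 1 + \sum_(k < (g - 4) %/ 4) d * (d - 1) ^ k + (d - 1) ^ ((g - 4) %/ 4).

(* Main.v *)
Require Import Defs.
From mathcomp Require Import all_boot all_order all_fingroup all_algebra zify.
Set Implicit Arguments. Unset Strict Implicit. Unset Printing Implicit Defensive.
Import GRing.Theory Num.Theory.

Fixpoint nbw (T : eqType) (s : seq T) : bool :=
  if s is x :: t then (if t is _ :: z :: _ then x != z else true) && nbw t else true.

Lemma nbw_catr (T : eqType) (s1 s2 : seq T) : nbw (s1 ++ s2) -> nbw s2.
Proof. by elim: s1 => //= x s1 IH /andP[_ /IH]. Qed.

Lemma nbw_catl (T : eqType) (s1 s2 : seq T) : nbw (s1 ++ s2) -> nbw s1.
Proof.
elim: s1 => //= x s1 IH /andP[H1 /IH ->]; rewrite andbT.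
by case: s1 H1 {IH} => [|y [|z s1]].
Qed.

Definition pen (T : eqType) (s : seq T) (b : T) : bool :=
  if rev s is _ :: z :: _ then z != b else true.

Lemma pen_cons2 (T : eqType) (x y z : T) s b : pen [:: x, y, z & s] b = pen [:: y, z & s] b.
Proof.
rewrite /pen (rev_cons x) .
case E: (rev [:: y, z & s]) => [|a [|c r]] //=.
by move/(congr1 size): E; rewrite size_rev.
Qed.

Lemma nbw_rcons (T : eqType) (s : seq T) b : nbw (rcons s b) = nbw s && pen s b.
Proof.
elim: s => [|x t IH] //=; rewrite IH.
case: t IH => [|y [|z t]] IH //=; rewrite ?andbT //.
by rewrite pen_cons2 !andbA.
Qed.

Lemma nbw_rev (T : eqType) (s : seq T) : nbw (rev s) = nbw s.
Proof.
elim: s => [|x t IH] //=; rewrite rev_cons nbw_rcons IH /pen revK andbC.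
case: t {IH} => [|y [|z t]] /=. all: try by []. by rewrite eq_sym.
Qed.

Lemma nbw_join (T : eqType) (P Q : seq T) y :
  nbw (rcons P y) -> nbw (y :: Q) ->
  (forall d, P != [::] -> Q != [::] -> last d P != head d Q) -> nbw (P ++ y :: Q).
Proof.
elim: P => [|u P IH] //= H1 H2 J.
move: H1 => /andP[c1 H1]; apply/andP; split; last first.
  apply: IH => // d P0 Q0; have := J d isT Q0.
  by case: P P0 J {H1 c1} => [|a P] //= _.
case: P {IH} c1 H1 J => [|v [|w P]] //= c1 _ J.
case: Q H2 J => [|z Q] //= _ J; have := J u isT isT; by [].
Qed.

Definition hascyc (T : eqType) (e : rel T) (k : nat) : Prop :=
  exists c : seq T, [/\ size c = k, 3 <= k, uniq c & path.cycle e c].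

Lemma not_uniq_split (T : eqType) (b : seq T) :
  ~~ uniq b -> exists b1 y b2, b = b1 ++ y :: b2 /\ y \in b2.
Proof.
elim: b => [|z t IH] //=; rewrite negb_and negbK; case/orP => [zt|/IH].
  by exists [::], z, t.
by case=> b1 [y [b2 [-> yb2]]]; exists (z :: b1), y, b2.
Qed.

Lemma closed_cycle (T : eqType) (e : rel T) (irr : forall z, ~~ e z z) :
  forall N s x, size s <= N -> path e x s -> nbw (x :: s) -> x \in s ->
  exists k, k <= size s /\ hascyc e k.
Proof.
elim=> [|N IH] s x.
  by rewrite leqn0 => /nilP ->.
move=> Hs Hp Hn Hx; move: Hs Hp Hn; case/splitPr: Hx => b r Hs Hp Hn.
move: Hp; rewrite cat_path /= => /and3P[pb el pr].
case Hu: (uniq (x :: b)).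
  case: b Hu pb el Hn Hs => [|y [|z b]] Hu pb el Hn Hs.
  - by move: el; rewrite /= (negbTE (irr x)).
  - by move: Hn => /= /andP[]; rewrite eqxx.
  exists (size [:: x, y, z & b]); split; first by rewrite size_cat /=; lia.
  exists [:: x, y, z & b]; split => //.
  by rewrite /path.cycle rcons_path pb el.
move/negbT: Hu; rewrite cons_uniq negb_and negbK; case/orP => [xb|/not_uniq_split].
  have := IH b x _ pb _ xb.
  case => //.
  - by move: Hs; rewrite ?size_cat /=; lia.
  - by move: Hn; rewrite -cat_cons => /nbw_catl.
  move=> k [kb hk]; exists k; split => //; move: kb; rewrite ?size_cat /=; lia.
case=> b1 [y [b2 [Eb yb2]]].
move: pb Hn Hs; rewrite Eb cat_path => /andP[_ /= /andP[_ pb2]] Hn Hs.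
have := IH b2 y _ pb2 _ yb2.
case => //.
- by move: Hs; rewrite ?size_cat /=; lia.
- move: Hn; rewrite -catA => /(@nbw_catr _ (x :: b1)).
  by move/(@nbw_catl _ (y :: b2) (x :: r)).
move=> k [kb hk]; exists k; split => //; move: kb; rewrite ?size_cat /=; lia.
Qed.

Lemma head_rev_cons (T : Type) (x d : T) p : head d (rev (x :: p)) = last x p.
Proof.
case/lastP: p => [|q z] //=.
by rewrite -rcons_cons rev_rcons last_rcons.
Qed.

Lemma rev_path_sym (T : Type) (e : rel T) (sym : symmetric e) x p y :
  path e x (rcons p y) -> path e y (rcons (rev p) x).
Proof.
move=> H; have := H; rewrite -rev_path belast_rcons last_rcons rev_cons.
by rewrite (@eq_path _ _ e) // => a b; rewrite sym.
Qed.

Lemma two_walks (T : eqType) (e : rel T) (sym : symmetric e) (irr : forall z, ~~ e z z) :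
  forall N x s1 s2, size s1 + size s2 <= N -> path e x s1 -> path e x s2 ->
  nbw (x :: s1) -> nbw (x :: s2) -> last x s1 = last x s2 -> s1 != s2 ->
  exists k, k <= size s1 + size s2 /\ hascyc e k.
Proof.
elim=> [|N IH] x s1 s2.
  by rewrite leqn0 addn_eq0 => /andP[/nilP -> /nilP ->]; rewrite eqxx.
move=> Hs p1 p2 n1 n2 El Ne.
case/lastP E1: s1 => [|q1 y1]; case/lastP E2: s2 => [|q2 y2].
- by move: Ne; rewrite E1 E2 eqxx.
- have xs2 : x \in s2 by move: El; rewrite E1 E2 last_rcons /= => Ex; rewrite {1}Ex mem_rcons mem_head.
  have := closed_cycle irr (leqnn _) p2 n2 xs2.
  by case=> k [kb hk]; exists k; split => //; move: kb; rewrite ?E1 ?E2 /= ?size_rcons; lia.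
- have xs1 : x \in s1 by move: El; rewrite E1 E2 last_rcons /= => <-; rewrite mem_rcons mem_head.
  have := closed_cycle irr (leqnn _) p1 n1 xs1.
  by case=> k [kb hk]; exists k; split => //; move: kb; rewrite ?E1 ?E2 /= ?size_rcons; lia.
move: El; rewrite E1 E2 !last_rcons => Ey; subst y2.
move: n1 n2; rewrite E1 E2 -!rcons_cons => N1 N2.
have := N1; rewrite nbw_rcons => /andP[n1 _].
have := N2; rewrite nbw_rcons => /andP[n2 _].
move: p1 p2 Hs Ne; rewrite E1 E2 !rcons_path.
move=> /andP[p1 e1] /andP[p2 e2] Hs Ne.
case: (eqVneq (last x q1) (last x q2)) => Eq.
  have := IH x q1 q2 _ p1 p2 n1 n2 Eq _.
  case.
  - by move: Hs; rewrite !size_rcons; lia.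
  - by apply: contraNneq Ne => ->.
  move=> k [kb hk]; exists k; split => //; rewrite !size_rcons; lia.
set S := q1 ++ y1 :: rcons (rev q2) x.
have pS : path e x S.
  rewrite cat_path p1 /= e1 /=; apply: rev_path_sym => //; by rewrite rcons_path p2 e2.
have nS : nbw (x :: S).
  have -> : x :: S = (x :: q1) ++ y1 :: rev (x :: q2) by rewrite /S rev_cons.
  apply: nbw_join.
  - by [].
  - by rewrite -rev_rcons nbw_rev.
  by move=> d _ _; rewrite head_rev_cons /=.
have xS : x \in S by rewrite /S mem_cat inE mem_rcons mem_head !orbT.
have := closed_cycle irr (leqnn _) pS nS xS.
case=> k [kb hk]; exists k; split => //; move: kb; rewrite /S size_cat /= !size_rcons size_rev; lia.
Qed.

Lemma tanner_sym n m (H : 'I_m -> 'I_n -> bool) : symmetric (tanner_adj H).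
Proof. by case=> [i|j] [i'|j']. Qed.

Lemma tanner_irr n m (H : 'I_m -> 'I_n -> bool) : forall z, ~~ tanner_adj H z z.
Proof. by case. Qed.

Definition ext n m (w : seq ('I_n + 'I_m)) (cv : 'I_m * 'I_n) :=
  rcons (rcons w (inr cv.1)) (inl cv.2).

Definition good n m (H : 'I_m -> 'I_n -> bool) (v0 : 'I_n) (A : pred 'I_m)
  (w : seq ('I_n + 'I_m)) (cv : 'I_m * 'I_n) : bool :=
  [&& (if w is [::] then A cv.1 else true),
      path (tanner_adj H) (inl v0) (ext w cv) & nbw (inl v0 :: ext w cv)].

Fixpoint walks n m (H : 'I_m -> 'I_n -> bool) (v0 : 'I_n) (A : pred 'I_m) (k : nat)
  : seq (seq ('I_n + 'I_m)) :=
  if k is k'.+1 then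
    [seq ext w cv | w <- walks H v0 A k', cv <- [seq cv <- index_enum _ | good H v0 A w cv]]
  else [:: [::]].

Lemma walksS n m (H : 'I_m -> 'I_n -> bool) v0 A k :
  walks H v0 A k.+1 =
  [seq ext w cv | w <- walks H v0 A k, cv <- [seq cv <- index_enum _ | good H v0 A w cv]].
Proof. by []. Qed.

Lemma walks_prop n m (H : 'I_m -> 'I_n -> bool) v0 A k w :
  w \in walks H v0 A k ->
  [/\ path (tanner_adj H) (inl v0) w, nbw (inl v0 :: w) & size w = 2 * k].
Proof.
elim: k w => [|k IH] w /=.
  by rewrite inE => /eqP ->.
case/allpairsPdep => w' [cv [/IH [_ _ sw] ]]; rewrite mem_filter => /andP[/and3P[_ pw nw] _] ->.
by split => //; rewrite /ext !size_rcons sw; lia.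
Qed.

Lemma walks_head n m (H : 'I_m -> 'I_n -> bool) v0 A k w :
  w \in walks H v0 A k.+1 -> exists c w', A c /\ w = inr c :: w'.
Proof.
elim: k w => [|k IH] w.
  case/allpairsPdep => w' [cv []]; rewrite inE => /eqP -> .
  by rewrite mem_filter => /andP[/and3P[Ac _ _] _] ->; exists cv.1, [:: inl cv.2].
case/allpairsPdep => w' [cv [/IH [c [w'' [Ac ->]]] _ ->]].
by exists c, (rcons (rcons w'' (inr cv.1)) (inl cv.2)).
Qed.

Lemma walks_uniq n m (H : 'I_m -> 'I_n -> bool) v0 A k : uniq (walks H v0 A k).
Proof.
elim: k => [|k IH] //=.
apply: allpairs_uniq_dep => //.
  by move=> w _; rewrite filter_uniq // index_enum_uniq.
move=> [w1 cv1] [w2 cv2] _ _ /=; rewrite /ext => /rcons_inj [/rcons_inj [-> E1] E2].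
case: E1 E2 => E1 E2; move: E1 E2; case: cv1 => a b; case: cv2 => a' b' /= -> ->. by [].
Qed.


Lemma pen_rcons2 (T : eqType) (s : seq T) a b z : pen (rcons (rcons s a) b) z = (a != z).
Proof. by rewrite /pen !rev_rcons. Qed.

Lemma inl_eq (A B : eqType) (a b : A) : (inl a == inl b :> A + B) = (a == b).
Proof. by apply/eqP/eqP => [[]|->]. Qed.

Lemma inr_eq (A B : eqType) (a b : B) : (inr a == inr b :> A + B) = (a == b).
Proof. by apply/eqP/eqP => [[]|->]. Qed.

Lemma good0 n m (H : 'I_m -> 'I_n -> bool) v0 A cv :
  good H v0 A [::] cv = (A cv.1 && H cv.1 v0) && (H cv.1 cv.2 && (cv.2 != v0)).
Proof.
case: cv => c v; rewrite /good /ext /= andbT inl_eq eq_sym.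
by case: (A c); case: (H c v0); case: (H c v); case: (v != v0).
Qed.

Lemma goodS n m (H : 'I_m -> 'I_n -> bool) v0 A w c0 u cv :
  good H v0 A w (c0, u) ->
  good H v0 A (ext w (c0, u)) cv = (H cv.1 u && (cv.1 != c0)) && (H cv.1 cv.2 && (cv.2 != u)).
Proof.
case: cv => c v; rewrite /good /ext; cbn [fst snd] => /and3P[_ pw nw].
have -> : (if rcons (rcons w (inr c0)) (inl u) is [::] then A c else true) = true.
  by case: w {pw nw} => //.
move: pw; rewrite !rcons_path !last_rcons => pw; rewrite pw.
move: nw; rewrite -!rcons_cons !nbw_rcons !pen_rcons2 => nw; rewrite nw /=.
rewrite inr_eq inl_eq (eq_sym c0) (eq_sym u).
by case: (H c u); case: (c != c0); case: (H c v); case: (v != u).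
Qed.

Definition pv n m (p : 'I_n -> nat) (z : 'I_n + 'I_m) : nat :=
  match z with inl i => p i | inr _ => 0 end.

Definition Ssum n m (H : 'I_m -> 'I_n -> bool) v0 A (p : 'I_n -> nat) k :=
  \sum_(w <- walks H v0 A k) pv p (last (inl v0) w).

Definition FIprop n m (H : 'I_m -> 'I_n -> bool) (p : 'I_n -> nat) :=
  forall j i, H j i -> p i <= \sum_(i' | H j i' && (i' != i)) p i'.

Lemma star n m (H : 'I_m -> 'I_n -> bool) p (C : pred 'I_m) u :
  FIprop H p -> (forall c, C c -> H c u) ->
  #|[set c | C c]| * p u <= \sum_(cv | C cv.1 && (H cv.1 cv.2 && (cv.2 != u))) p cv.2.
Proof.
move=> FI CH.
rewrite -(@pair_big_dep _ _ _ _ _ C (fun c v => H c v && (v != u)) (fun c v => p v)) /=.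
rewrite -sum_nat_const big_mkcond [X in _ <= X]big_mkcond /=.
apply: leq_sum => c _; rewrite inE; case Cc: (C c) => //.
exact: FI (CH _ Cc).
Qed.

Lemma good_edge n m (H : 'I_m -> 'I_n -> bool) v0 A w c v : good H v0 A w (c, v) -> H c v.
Proof. by rewrite /good /ext !rcons_path last_rcons => /and3P[_ /andP[_ E] _]. Qed.

Lemma Ssum1 n m (H : 'I_m -> 'I_n -> bool) v0 A p :
  FIprop H p -> #|[set c | A c && H c v0]| * p v0 <= Ssum H v0 A p 1.
Proof.
move=> FI; rewrite /Ssum /= cats0 big_map big_filter.
rewrite (eq_bigl _ _ (good0 H v0 A)).
rewrite (eq_bigr (fun cv => p cv.2)); last by move=> [c v] _; rewrite /ext last_rcons.
by apply: star => // c /andP[].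
Qed.

Lemma SsumS n m (H : 'I_m -> 'I_n -> bool) v0 A p d k :
  FIprop H p -> (forall i, d <= var_deg H i) ->
  (d - 1) * Ssum H v0 A p k.+1 <= Ssum H v0 A p k.+2.
Proof.
move=> FI dH; rewrite /Ssum.
rewrite (walksS H v0 A k.+1) big_allpairs_dep (walksS H v0 A k) !big_allpairs_dep big_distrr /=.
apply: leq_sum => w' _; rewrite big_distrr /= !big_filter.
apply: leq_sum => [[c0 u]] gw.
rewrite big_filter (eq_bigl _ _ (fun cv => goodS cv gw)).
rewrite (eq_bigr (fun cv => p cv.2)); last by move=> [c v] _; rewrite /ext last_rcons.
rewrite /ext last_rcons /=.
apply: (leq_trans _ (@star _ _ H p (fun c => H c u && (c != c0)) u FI _)); last by move=> c /andP[].
rewrite leq_mul2r; apply/orP; right.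
have Hc0 := good_edge gw.
have -> : [set c | H c u && (c != c0)] = [set c | H c u] :\ c0.
  by apply/setP => c; rewrite !inE andbC.
have := cardsD1 c0 [set c | H c u]; rewrite inE Hc0 /= add1n => E.
have := dH u; rewrite /var_deg E; lia.
Qed.

Fixpoint allw n m (H : 'I_m -> 'I_n -> bool) v0 k : seq (seq ('I_n + 'I_m)) :=
  if k is k'.+1 then allw H v0 k' ++ walks H v0 predT k' else [::].

Lemma allw_mem n m (H : 'I_m -> 'I_n -> bool) v0 k w :
  w \in allw H v0 k -> exists2 j, j < k & w \in walks H v0 predT j.
Proof.
elim: k => [|k IH] //=; rewrite mem_cat => /orP[/IH [j jk wj]|wk].
  by exists j => //; apply: ltnW.
by exists k.
Qed.

Lemma allw_uniq n m (H : 'I_m -> 'I_n -> bool) v0 k : uniq (allw H v0 k).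
Proof.
elim: k => [|k IH] //=; rewrite cat_uniq IH walks_uniq andbT /=.
apply/hasPn => w wk; apply/negP => /allw_mem [j jk wj].
have [_ _ s1] := walks_prop wj; have [_ _ s2] := walks_prop wk.
by move: jk; rewrite s1 in s2; lia.
Qed.

Lemma allw_sum n m (H : 'I_m -> 'I_n -> bool) v0 k (F : seq ('I_n + 'I_m) -> nat) :
  \sum_(w <- allw H v0 k) F w = \sum_(j < k) \sum_(w <- walks H v0 predT j) F w.
Proof.
elim: k => [|k IH]; first by rewrite big_ord0 big_nil.
by rewrite /= big_cat IH big_ord_recr.
Qed.

Lemma sum_le_total n m (p : 'I_n -> nat) (x : 'I_n + 'I_m) (L : seq (seq ('I_n + 'I_m))) :
  uniq (map (last x) L) -> \sum_(w <- L) pv p (last x w) <= \sum_(i < n) p i.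
Proof.
move=> U; rewrite -(big_map (last x) predT (pv p)) big_uniq //.
apply: (@leq_trans (\sum_(z : 'I_n + 'I_m) pv p z)).
  rewrite big_mkcond /=; apply: leq_sum => z _; by case: ifP.
by rewrite big_sumType /= [X in _ + X]big1 ?addn0.
Qed.

Lemma Ssum0 n m (H : 'I_m -> 'I_n -> bool) v0 A p : Ssum H v0 A p 0 = p v0.
Proof. by rewrite /Ssum /= big_seq1. Qed.

Lemma Ssum_full n m (H : 'I_m -> 'I_n -> bool) v0 p d j :
  FIprop H p -> (forall i, d <= var_deg H i) ->
  d * (d - 1) ^ j * p v0 <= Ssum H v0 predT p j.+1.
Proof.
move=> FI dH; elim: j => [|j IH].
  rewrite expn0 muln1; apply: leq_trans (@Ssum1 _ _ H v0 _ p FI).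
  rewrite leq_mul2r; apply/orP; right.
  have := dH v0; rewrite /var_deg.
  by rewrite (_ : [set c | predT c && H c v0] = [set c | H c v0]) //; apply/setP => c; rewrite !inE.
apply: leq_trans (@SsumS _ _ H v0 _ p d j FI dH).
by rewrite expnS mulnCA -mulnA leq_mul2l IH orbT.
Qed.

Lemma Ssum_one n m (H : 'I_m -> 'I_n -> bool) v0 p d c j :
  FIprop H p -> (forall i, d <= var_deg H i) -> H c v0 ->
  (d - 1) ^ j * p v0 <= Ssum H v0 (pred1 c) p j.+1.
Proof.
move=> FI dH Hc; elim: j => [|j IH].
  rewrite expn0 mul1n; apply: leq_trans (@Ssum1 _ _ H v0 _ p FI).
  rewrite (_ : [set c' | pred1 c c' && H c' v0] = [set c]) ?cards1 ?mul1n //.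
  by apply/setP => c'; rewrite !inE /=; case: eqP => // ->.
apply: leq_trans (@SsumS _ _ H v0 _ p d j FI dH).
by rewrite expnS -mulnA leq_mul2l IH orbT.
Qed.

Lemma walks_inj n m (H : 'I_m -> 'I_n -> bool) v0 A B k1 k2 K w1 w2 :
  (forall k, k <= K -> ~ hascyc (tanner_adj H) k) ->
  w1 \in walks H v0 A k1 -> w2 \in walks H v0 B k2 -> 2 * k1 + 2 * k2 <= K ->
  last (inl v0) w1 = last (inl v0) w2 -> w1 = w2.
Proof.
move=> NC h1 h2 kK El; apply/eqP; apply/negPn/negP => Ne.
have [p1 n1 s1] := walks_prop h1; have [p2 n2 s2] := walks_prop h2.
have [k [kb hk]] := two_walks (tanner_sym H) (tanner_irr H) (leqnn _) p1 p2 n1 n2 El Ne.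
by apply: (NC k) => //; move: kb; rewrite s1 s2; lia.
Qed.

Lemma walks_inj_c n m (H : 'I_m -> 'I_n -> bool) v0 c k K w1 w2 :
  (forall k, k <= K -> ~ hascyc (tanner_adj H) k) ->
  w1 \in walks H v0 (pred1 c) k.+1 -> w2 \in walks H v0 (pred1 c) k.+1 -> 4 * k + 2 <= K ->
  last (inl v0) w1 = last (inl v0) w2 -> w1 = w2.
Proof.
move=> NC h1 h2 kK El; apply/eqP; apply/negPn/negP => Ne.
have [p1 n1 s1] := walks_prop h1; have [p2 n2 s2] := walks_prop h2.
move: (walks_head h1) (walks_head h2) => [c1 [w1' [/eqP E1 Ew1]]] [c2 [w2' [/eqP E2 Ew2]]].
subst w1 w2 c1 c2.
move: p1 p2 n1 n2 El Ne s1 s2 => /= /andP[_ p1] /andP[_ p2] /andP[_ n1] /andP[_ n2] El Ne s1 s2.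
have Ne' : w1' != w2' by apply: contraNneq Ne => ->.
have [k' [kb hk]] := two_walks (tanner_sym H) (tanner_irr H) (leqnn _) p1 p2 n1 n2 El Ne'.
have : k' <= K by move: kb s1 s2 kK; rewrite /=; set a := size w1'; set b := size w2'; lia.
by move/(NC k').
Qed.

Lemma sum_allw n m (H : 'I_m -> 'I_n -> bool) p v0 d t :
  FIprop H p -> (forall i, d <= var_deg H i) ->
  p v0 * (1 + \sum_(k < t) d * (d - 1) ^ k) <=
  \sum_(w <- allw H v0 t.+1) pv p (last (inl v0) w).
Proof.
move=> FI dH; rewrite allw_sum big_ord_recl /=.
have -> : \sum_(w <- walks H v0 predT 0) pv p (last (inl v0) w) = p v0 by rewrite /= big_seq1.
rewrite mulnDr muln1 leq_add2l big_distrr /=; apply: leq_sum => j _.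
by rewrite mulnC; exact: (@Ssum_full _ _ H v0 p d j FI dH).
Qed.

Lemma uniq_allw n m (H : 'I_m -> 'I_n -> bool) v0 t K :
  (forall k, k <= K -> ~ hascyc (tanner_adj H) k) -> 4 * t <= K ->
  uniq (map (last (inl v0)) (allw H v0 t.+1)).
Proof.
move=> NC tK; rewrite map_inj_in_uniq ?allw_uniq // => w1 w2 /allw_mem [j1 j1t h1] /allw_mem [j2 j2t h2].
by apply: (walks_inj NC h1 h2); lia.
Qed.

Lemma tree_odd n m (H : 'I_m -> 'I_n -> bool) p v0 d t :
  FIprop H p -> (forall i, d <= var_deg H i) ->
  (forall k, k <= 4 * t -> ~ hascyc (tanner_adj H) k) ->
  p v0 * (1 + \sum_(k < t) d * (d - 1) ^ k) <= \sum_(i < n) p i.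
Proof.
move=> FI dH NC; apply: leq_trans (sum_allw v0 t FI dH) _.
by apply: sum_le_total; apply: (uniq_allw _ NC).
Qed.

Lemma tree_even n m (H : 'I_m -> 'I_n -> bool) p v0 d t c :
  FIprop H p -> (forall i, d <= var_deg H i) -> H c v0 ->
  (forall k, k <= 4 * t + 2 -> ~ hascyc (tanner_adj H) k) ->
  p v0 * (1 + \sum_(k < t) d * (d - 1) ^ k + (d - 1) ^ t) <= \sum_(i < n) p i.
Proof.
move=> FI dH Hc NC.
apply: (@leq_trans (\sum_(w <- allw H v0 t.+1 ++ walks H v0 (pred1 c) t.+1) pv p (last (inl v0) w))).
  rewrite big_cat mulnDr leq_add ?(sum_allw v0 t FI dH) //.
  by rewrite mulnC; apply: (Ssum_one _ FI dH Hc).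
apply: sum_le_total; rewrite map_inj_in_uniq.
  rewrite cat_uniq allw_uniq walks_uniq andbT.
  apply/hasPn => w wk; apply/negP => /allw_mem [j jk wj].
  have [_ _ s1] := walks_prop wj; have [_ _ s2] := walks_prop wk.
  by move: jk; rewrite s1 in s2; lia.
move=> w1 w2; rewrite (mem_cat w1 (allw H v0 t.+1)) (mem_cat w2 (allw H v0 t.+1)) => /orP[] h1 /orP[] h2.
- move: h1 h2 => /allw_mem [j1 j1t h1] /allw_mem [j2 j2t h2].
  by apply: (walks_inj NC h1 h2); lia.
- move: h1 => /allw_mem [j1 j1t h1].
  by apply: (walks_inj NC h1 h2); lia.
- move: h2 => /allw_mem [j2 j2t h2].
  by apply: (walks_inj NC h1 h2); lia.
by apply: (walks_inj_c NC h1 h2); lia.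
Qed.

Lemma pcw_FI n m (H : 'I_m -> 'I_n -> bool) p : pseudocodeword H p -> FIprop H p.
Proof.
case=> l [pi [x [LC Hp]]] j i Hji.
set B := [set ia : 'I_n * 'I_l | (H j ia.1 && (ia.1 != i)) && x ia.1 ia.2].
have cardB : #|B| = \sum_(i' | H j i' && (i' != i)) p i'.
  rewrite -sum1_card (eq_bigl (fun ia : 'I_n * 'I_l => (H j ia.1 && (ia.1 != i)) && x ia.1 ia.2));
    last by move=> ia; rewrite inE.
  rewrite -(@pair_big_dep _ _ _ _ _ (fun i' => H j i' && (i' != i)) (fun i' a => x i' a) (fun _ _ => 1)).
  apply: eq_bigr => i' _; rewrite Hp -sum1_card; apply: eq_bigl => a; by rewrite inE.
set Sb := fun b => [set ia : 'I_n * 'I_l | [&& H j ia.1, pi j ia.1 ia.2 == b & x ia.1 ia.2]].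
set f := fun a => odflt (i, a) [pick ia in Sb (pi j i a) | ia.1 != i].
have fP : forall a, x i a -> f a \in B /\ pi j (f a).1 (f a).2 = pi j i a.
  move=> a xa; rewrite /f; case: pickP => [ia /andP[ias ia1]|none] /=.
    move: ias; rewrite /Sb inE => /and3P[h1 /eqP h2 h3].
    by rewrite inE h1 ia1 h3.
  exfalso; have := LC j (pi j i a); rewrite -/(Sb (pi j i a)).
  have -> : Sb (pi j i a) = [set (i, a)].
    apply/setP => [[i' a']]; rewrite !inE /=.
    apply/idP/idP.
      move=> h; have := none (i', a'); rewrite /Sb inE /= h /= => /negbFE /eqP Ei.
      subst i'; move: h => /and3P[_ /eqP /perm_inj -> _]; by rewrite eqxx.
    by move/eqP => [-> ->]; rewrite Hji eqxx xa.
  by rewrite cards1.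
rewrite -cardB Hp.
have inj : {in [set a | x i a] &, injective f}.
  move=> a1 a2; rewrite !inE => x1 x2 E.
  have [_ e1] := fP a1 x1; have [_ e2] := fP a2 x2.
  by apply: (@perm_inj _ (pi j i)); rewrite -e1 -e2 E.
rewrite -(card_in_imset inj); apply: subset_leq_card.
apply/subsetP => z /imsetP [a]; rewrite inE => xa ->.
by have [] := fP a xa.
Qed.

Lemma tree_bound n m (H : 'I_m -> 'I_n -> bool) (g d : nat) p v0 :
  regular_tanner H -> girth_is H g -> smallest_left_degree H d ->
  FIprop H p ->
  girth_bound d g * p v0 <= \sum_(i < n) p i.
Proof.
move=> [dv [dc [Rv _]]] [[c [sc g3 uc cc]] NS] [[i1 Hi1] dH] FI.
have NC : forall k, k < g -> ~ hascyc (tanner_adj H) k by move=> k /NS.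
have E1 := odd_double_half g; have E2 := odd_double_half g./2.
rewrite /girth_bound; case: ifP => Ho.
  set t := (g - 2) %/ 4.
  rewrite [_ * p v0]mulnC; apply: tree_odd FI dH _ => k kt; apply: NC.
  move: kt E1 E2; rewrite /t Ho; case: (odd g) => /=; lia.
set t := (g - 4) %/ 4.
have [c0 Hc0] : exists c0, H c0 v0.
  have : 0 < var_deg H v0.
    have [a [b [c' Ec]]] : exists a b c', c = a :: b :: c'.
      by move: sc; case: (c) => [|a [|b c']] /= sc; [lia|lia|exists a, b, c'].
    move: cc; rewrite Ec /path.cycle /= => /andP[ab _].
    rewrite Rv; case: a b ab {Ec} => [ia|ja] [ib|jb] //= ab.
    - by rewrite -(Rv ia) /var_deg card_gt0; apply/set0Pn; exists jb; rewrite inE.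
    - by rewrite -(Rv ib) /var_deg card_gt0; apply/set0Pn; exists ja; rewrite inE.
  by rewrite /var_deg card_gt0 => /set0Pn [c0]; rewrite inE; exists c0.
rewrite [_ * p v0]mulnC; apply: (tree_even FI dH Hc0) => k kt; apply: NC.
move: kt E1 E2; rewrite /t Ho; case: (odd g) => /=; lia.
Qed.

Unset Implicit Arguments.

Theorem theorem1 (n m : nat) (H : 'I_m -> 'I_n -> bool) (g d : nat) :
  regular_tanner H -> girth_is H g -> smallest_left_degree H d ->
  forall p : 'I_n -> nat, pseudocodeword H p -> (exists i, p i != 0) ->
    girth_bound d g <= w_BSC p /\ ((girth_bound d g)%:R <= w_AWGN p)%R.
Proof.
move=> reg gir sm p pcw [i0 nz0].
have FI := pcw_FI pcw.
have [v0 _ Hmax] : exists2 v0 : 'I_n, true & forall i, p i <= p v0.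
  case: (arg_maxnP p (P := predT) (i0 := i0) isT) => v0 _ Hv.
  by exists v0 => // i; apply: Hv.
have pos : 0 < p v0 by apply: leq_trans (Hmax i0); rewrite lt0n.
have Pb := tree_bound v0 reg gir sm FI.
set b := girth_bound d g in Pb *.
have psumE : psum p = \sum_(i < n) p i by [].
split.
  rewrite /w_BSC.
  set e := bsc_e p.
  have hasP : has (fun e => psum p <= 2 * sum_largest p e) (iota 0 n.+1).
    apply/hasP; exists n; first by rewrite mem_iota /=.
    apply: (leq_trans _ (leq_pmull (sum_largest p n) (isT : 0 < 2))); rewrite /sum_largest.
    apply: (bigmax_sup setT); first by rewrite cardsT card_ord.
    by rewrite psumE; apply/eq_leq/eq_bigl => i; rewrite inE.
  have Pe : psum p <= 2 * sum_largest p e.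
    have := nth_find 0 hasP; rewrite -/(bsc_e p) -/e nth_iota //.
    by move: hasP; rewrite has_find size_iota.
  have SLe : sum_largest p e <= e * p v0.
    apply/bigmax_leqP => S /eqP <-.
    rewrite -sum_nat_const; apply: leq_sum => i _; exact: Hmax.
  case: ifP => [_|/negbT Ne].
    have : b * p v0 <= (2 * e) * p v0 by lia.
    by rewrite leq_pmul2r.
  have lt : psum p < 2 * sum_largest p e by rewrite ltn_neqAle eq_sym Ne Pe.
  have : b * p v0 < (2 * e) * p v0 by lia.
  rewrite ltn_pmul2r // => H2; lia.
have sq_pos : 0 < \sum_(i < n) p i ^ 2.
  by rewrite (bigD1 i0) //= addn_gt0 expn_gt0 lt0n nz0.
have sq_le : \sum_(i < n) p i ^ 2 <= p v0 * \sum_(i < n) p i.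
  rewrite big_distrr /=; apply: leq_sum => i _.
  by rewrite (expnS _ 1) expn1 leq_mul2r Hmax orbT.
have key : b * \sum_(i < n) p i ^ 2 <= psum p ^ 2.
  apply: (leq_trans (leq_mul (leqnn b) sq_le)).
  by rewrite mulnA psumE (expnS _ 1) expn1 leq_mul2r Pb orbT.
rewrite /w_AWGN ler_pdivlMr ?ltr0n // -natrM ler_nat.
exact: key.
Qed.
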